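(* Let $n\le m$ be natural numbers with $n$ coprime to $m$. Then $\frac{m!}{(n-1)!}\leq\dim(W_{n,m})$.
   Context: $\mathbb{F}$ is a field of characteristic zero; $\mathbb{F}\langle X\rangle$ the free non-unitary associative algebra on $X=\{x_1,x_2,\dots\}$; $(x^n)^T$ the smallest ideal containing $x^n$ invariant under all algebra endomorphisms; $V_m$ the space of multilinear polynomials of degree $m$ in $x_1,\dots,x_m$; $W_{n,m}:=V_m\cap(x^n)^T$ (defined for $n\le m$). *)

(* Defs.v *)
From HB Require Import structures.
From mathcomp Require Import all_boot all_algebra.
From mathcomp Require Import finmap monalg.
Set Implicit Arguments. Unset Strict Implicit. Unset Printing Implicit Defensive.
Import GRing.Theory.
Local Open Scope ring_scope.

(* The unital free associative algebra F<1,X> on variables indexed by nat: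
   linear combinations of words (free monoid {fmonom nat}).
   Convention: the variable x_(k+1) of the paper is the letter k. *)
Definition FA (F : fieldType) := {malg F[{fmonom nat}]}.

Definition xvar (F : fieldType) (i : nat) : FA F := << fmu i.-1 >>.

(* The free NON-unitary algebra F<X> is the subset of FA of elements with
   zero constant term (coefficient of the empty word). *)
Definition nonunital (F : fieldType) (p : FA F) : Prop :=
  p@_(FMonom [::]) = 0.

(* algebra endomorphisms of the non-unitary algebra F<X>
   (only the restriction of phi to F<X> matters) *)
Definition is_endo (F : fieldType) (phi : FA F -> FA F) : Prop :=
  [/\ forall p, nonunital p -> nonunital (phi p),
      forall (c : F) p q, nonunital p -> nonunital q ->
         phi (c *: p + q) = c *: phi p + phi q
    & forall p q, nonunital p -> nonunital q -> phi (p * q) = phi p * phi q].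

Definition is_ideal (F : fieldType) (I : FA F -> Prop) : Prop :=
  [/\ forall p, I p -> nonunital p,
      I 0,
      forall (c : F) p q, I p -> I q -> I (c *: p + q)
    & forall a p, nonunital a -> I p -> I (a * p) /\ I (p * a)].

Definition T_invariant (F : fieldType) (I : FA F -> Prop) : Prop :=
  forall phi, is_endo phi -> forall p, I p -> I (phi p).

Definition Tideal (F : fieldType) (f : FA F) (p : FA F) : Prop :=
  forall I, is_ideal I -> T_invariant I -> I f -> I p.

Definition Vm (F : fieldType) (m : nat) (p : FA F) : Prop :=
  forall w, w \in msupp p -> perm_eq (fmonom_val w) (iota 0 m).

Definition Wnm (F : fieldType) (n m : nat) (p : FA F) : Prop :=
  Vm m p /\ Tideal (xvar F 1 ^+ n) p.

(* coordinates of a polynomial on the words of length m in the letters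
   0..m-1 (injective on V_m): an F-linear map into a finite-dim. space *)
Definition coordV (F : fieldType) (m : nat) (p : FA F)
  : 'rV[F]_#|{: m.-tuple 'I_m}| :=
  \row_i p@_(FMonom (map (@nat_of_ord m) (@enum_val (m.-tuple 'I_m) predT i))).

(* dim S >= d for a subspace S of V_m: the image of S under the coordinate
   isomorphism is a subspace U of dimension >= d *)
Definition dim_ge (F : fieldType) (m : nat) (S : FA F -> Prop) (d : nat) : Prop :=
  exists U : {vspace 'rV[F]_#|{: m.-tuple 'I_m}|},
    (forall v, v \in U <-> exists p, S p /\ coordV m p = v) /\ (d <= \dim U)%N.

(* Main.v *)
Require Import Defs.
From mathcomp Require Import all_boot all_algebra.
From mathcomp Require Import finmap monalg.
From HB Require Import structures.
From mathcomp Require Import fingroup perm.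
From Stdlib Require Import Classical.
From mathcomp Require Import zify.
Set Implicit Arguments. Unset Strict Implicit. Unset Printing Implicit Defensive.
Import GRing.Theory.

Local Notation "1" := (@mone _) : monom_scope.
Local Notation "x * y" := (mmul x y) : monom_scope.

Local Open Scope ring_scope.


Section Subst.
Variable F : fieldType.
Local Notation FA := (FA F).
Implicit Types p q z : FA.

Lemma malgC_comm (c : F) p : GRing.comm (c%:MP : FA) p.
Proof.
rewrite /GRing.comm {2}[p]monalgE {1}[p]monalgE mulr_sumr mulr_suml.
apply: eq_bigr => k _; rewrite !malgM_def !fgmulUU mul1m mulm1 mulrC //.
Qed.

Definition hz z (w : {fmonom nat}) : FA := z ^+ size (fmonom_val w).

Lemma hz_mmorph z : mmorphism (hz z).
Proof.
split; last by rewrite /hz fm1 expr0.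
by move=> a b; rewrite /hz fmM size_cat exprD.
Qed.

HB.instance Definition _ z := monalg.isMultiplicative.Build _ _ (hz z) (hz_mmorph z).

Definition phi z : FA -> FA := mmap (@malgC {fmonom nat} F) (hz z).

Lemma phiZ z c p : phi z (c *: p) = c *: phi z p.
Proof. by rewrite /phi mmapZ mul_malgC. Qed.

Lemma phiD z p q : phi z (p + q) = phi z p + phi z q.
Proof. by rewrite /phi mmapD. Qed.

Lemma phiM z p q : phi z (p * q) = phi z p * phi z q.
Proof.
have H0 := @commr_mmap_is_multiplicative _ _ _ (@malgC {fmonom nat} F) (hz z).
have [H _] := H0 (fun g m m' => malgC_comm _ _); exact: H.
Qed.

Lemma phi1 z : phi z 1 = 1.
Proof. by rewrite /phi mmap1. Qed.

Lemma phiX z p k : phi z (p ^+ k) = phi z p ^+ k.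
Proof. by elim: k => [|k IH]; rewrite ?expr0 ?phi1 // !exprS phiM IH. Qed.

Lemma nonunitalE p : nonunital p <-> @mcoeff {fmonom nat} F 1%M p = 0.
Proof. by rewrite /nonunital -fm1 fmK. Qed.

Lemma phi_nonunital z p : nonunital z -> nonunital p -> nonunital (phi z p).
Proof.
move=> /nonunitalE z0 /nonunitalE p0; apply/nonunitalE.
rewrite /phi mmapE raddf_sum /= big1 // => k _.
rewrite rmorphM /= malgCK /hz rmorphXn /= z0 expr0n.
case: eqP => [/size0nil|_]; last by rewrite mulr0.
move=> k0; have -> : k = 1%M by apply/eqP; rewrite fmP k0 fm1.
by rewrite p0 mul0r.
Qed.

Lemma phi_endo z : nonunital z -> is_endo (phi z).
Proof.
move=> nz; split => [p|c p q _ _|p q _ _]; first exact: phi_nonunital.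
  by rewrite phiD phiZ.
exact: phiM.
Qed.

Lemma phi_x z : phi z (xvar F 1) = z.
Proof. by rewrite /phi /xvar mmapU /= fmuE /hz expr1 mul1r. Qed.

End Subst.

Section Key.
Variable F : fieldType.

Lemma prod_ind01 (I : finType) (P : pred I) :
  \prod_(i : I) ((P i)%:R : F) = ([forall i, P i])%:R.
Proof.
case: forallP => [H|/forallP]; first by rewrite big1 // => i _; rewrite H.
rewrite negb_forall => /existsP [i Pi].
by rewrite (bigD1 i) //= (negbTE Pi) mul0r.
Qed.

Lemma codom_all_inj k (g : {ffun 'I_k -> 'I_k}) :
  [forall i, i \in codom g] = injectiveb g.
Proof.
apply/idP/idP.
  move=> /forallP H.
  have H2 : #|image g (@predT 'I_k)| == #|(@predT 'I_k)|.
    apply/eqP/eq_card => i.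
    by move: (H i) => /= ->.
  move/image_injP: H2 => inj.
  by apply/injectiveP => x y; apply: inj.
move/injectiveP=> inj; apply/forallP => i.
by rewrite -[i](f_invF inj) codom_f.
Qed.

Lemma key_sum k (g : {ffun 'I_k -> 'I_k}) :
  \sum_(phi : {ffun 'I_k -> bool})
     (\prod_i (if phi i then 1 else -1 : F)) * ([forall j, phi (g j)])%:R
  = (injectiveb g)%:R.
Proof.
pose h i (b : bool) : F := (if b then 1 else -1) *
   ((~~ ((i \in codom g) && ~~ b)))%:R.
transitivity (\sum_(phi : {ffun 'I_k -> bool}) \prod_i h i (phi i)).
  apply: eq_bigr => phi _; rewrite /h big_split /=; congr (_ * _).
  rewrite prod_ind01; congr ((nat_of_bool _)%:R); apply/idP/idP => /forallP H; apply/forallP => i.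
    by rewrite negb_and negbK -implybE; apply/implyP => /codomP [j ->].
  by have := H (g i); rewrite codom_f /= negbK.
rewrite -bigA_distr_bigA /=.
transitivity (\prod_(i : 'I_k) ((i \in codom g)%:R : F)).
  by apply: eq_bigr => i _; rewrite big_bool /h /=; case: (i \in codom g);
     rewrite /= ?mulr1 ?mulr0 ?addr0 ?subrr.
by rewrite prod_ind01 codom_all_inj.
Qed.
End Key.

Section Polar.
Variable F : fieldType.
Local Notation FA := (FA F).

Lemma prod_zero (I : eqType) (r : seq I) (G : I -> FA) j :
  j \in r -> G j = 0 -> \prod_(i <- r) G i = 0.
Proof.
elim: r => [//|a r IH]; rewrite inE big_cons => /orP [/eqP <- -> |jr Gj].
  by rewrite mul0r.
by rewrite IH ?mulr0.
Qed.

Lemma polar k (ys : 'I_k -> FA) :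
  \sum_(phi : {ffun 'I_k -> bool})
     (\prod_i (if phi i then 1 else -1 : F)) *:
        (\sum_i (if phi i then ys i else 0)) ^+ k
  = \sum_(g : {ffun 'I_k -> 'I_k} | injectiveb g) \prod_j ys (g j).
Proof.
have step1 phi : (\sum_i (if phi i then ys i else 0)) ^+ k =
   \sum_(g : {ffun 'I_k -> 'I_k}) ([forall j, phi (g j)])%:R *: \prod_j ys (g j).
  rewrite -[X in _ ^+ X](card_ord k) -prodr_const bigA_distr_bigA /=.
  apply: eq_bigr => g _; case: forallP => [H|/forallP].
    by rewrite scale1r; apply: eq_bigr => j _; rewrite H.
  rewrite negb_forall => /existsP [j Hj]; rewrite scale0r.
  by apply: (@prod_zero _ _ _ j); rewrite ?mem_index_enum // (negbTE Hj).
transitivity (\sum_(g : {ffun 'I_k -> 'I_k}) (injectiveb g)%:R *: \prod_j ys (g j)).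
  under eq_bigr => phi _ do rewrite step1 scaler_sumr.
  rewrite exchange_big /=; apply: eq_bigr => g _.
  by rewrite -(key_sum F g) scaler_suml; apply: eq_bigr => phi _; rewrite scalerA.
rewrite [RHS]big_mkcond /=; apply: eq_bigr => g _.
by case: (injectiveb g); rewrite ?scale1r ?scale0r.
Qed.
End Polar.

Local Close Scope ring_scope.
Section Comb.
Variables (k m : nat).
Hypothesis Hkm : k < m.
Local Notation L := (m - k).
Local Notation n := k.+1.

Implicit Types (f : {ffun 'I_L -> 'I_m}) (g : {ffun 'I_n -> 'I_n}).

Definition wf f : seq nat := [seq val (f i) | i <- enum 'I_L].
Definition af f : seq nat := [seq val i | i <- enum 'I_m & i \notin codom f].
Definition ws f : seq (seq nat) := rcons [seq [:: a] | a <- af f] (wf f).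
Definition W f (i : 'I_n) : seq nat := nth [::] (ws f) i.
Definition arr f g : seq nat := flatten [seq W f (g j) | j <- enum 'I_n].

Lemma size_wf f : size (wf f) = L.
Proof. by rewrite size_map size_enum_ord. Qed.

Lemma perm_aw f : injective f -> perm_eq (af f ++ wf f) (iota 0 m).
Proof.
move=> injf; apply: uniq_perm; last first.
- move=> x; rewrite mem_iota add0n leq0n /= mem_cat; apply/idP/idP.
    by rewrite /af /wf; case/orP => /mapP [i _ ->]; apply: ltn_ord.
  move=> xm; pose j := Ordinal xm.
  have [/codomP [i ji]|nj] := boolP (j \in codom f).
    by rewrite /wf; apply/orP; right; apply/mapP; exists i; rewrite ?mem_enum // -ji.
  by rewrite /af; apply/orP; left; apply/mapP; exists j; rewrite // mem_filter nj mem_enum.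
- exact: iota_uniq.
rewrite /af /wf cat_uniq; apply/and3P; split.
- rewrite map_inj_uniq; [exact/filter_uniq/enum_uniq | exact: val_inj].
- apply/hasPn => x /mapP [i _ ->]; apply/negP => /mapP [j].
  rewrite mem_filter => /andP [nj _] /val_inj eji.
  by move: nj; rewrite -eji codom_f.
by rewrite /wf map_inj_uniq ?enum_uniq // => x y /val_inj /injf.
Qed.

Lemma size_af f : injective f -> size (af f) = k.
Proof.
move=> injf; have := perm_size (perm_aw injf).
rewrite size_cat size_iota size_wf => H.
by apply/eqP; rewrite -(eqn_add2r L) H subnKC // ltnW.
Qed.

Lemma size_ws f : injective f -> size (ws f) = n.
Proof. by move=> injf; rewrite size_rcons size_map size_af. Qed.

Lemma W_max f : injective f -> W f ord_max = wf f.
Proof.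
by move=> injf; rewrite /W /ws nth_rcons size_map size_af // ltnn eqxx.
Qed.

Lemma W_lt f (i : 'I_n) : injective f -> i != ord_max -> W f i = [:: nth 0 (af f) i].
Proof.
move=> injf ni; have ik : (i < k)%N.
  by have := ltn_ord i; rewrite ltnS leq_eqVlt => /orP [/eqP ei|//]; case/eqP: ni; apply: val_inj.
by rewrite /W /ws nth_rcons size_map size_af // ik (nth_map 0) // size_af.
Qed.

Lemma W_neq0 f (i : 'I_n) : injective f -> W f i != [::].
Proof.
move=> injf; have [->|ni] := eqVneq i ord_max; last by rewrite W_lt.
by rewrite W_max // -size_eq0 size_wf subn_eq0 -ltnNge.
Qed.

Lemma map_W_enum f : injective f -> [seq W f j | j <- enum 'I_n] = ws f.
Proof.
move=> injf; rewrite /W.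
have -> : [seq nth [::] (ws f) j | j : 'I_n <- enum 'I_n] =
   map (nth [::] (ws f)) (map (@nat_of_ord n) (enum 'I_n)) by rewrite -map_comp.
rewrite val_enum_ord.
by rewrite -(size_ws injf) -/(mkseq _ _) mkseq_nth.
Qed.

Lemma flatten_ws f : flatten (ws f) = af f ++ wf f.
Proof. by rewrite /ws flatten_rcons flatten_seq1. Qed.

Lemma perm_enum_inj g : injective g -> perm_eq [seq g j | j <- enum 'I_n] (enum 'I_n).
Proof.
move=> injg; apply: uniq_perm.
- rewrite map_inj_uniq //; exact: enum_uniq.
- exact: enum_uniq.
by move=> x; rewrite mem_enum; apply/mapP; exists (invF injg x); rewrite ?mem_enum ?f_invF.
Qed.

Lemma perm_arr f g : injective f -> injective g -> perm_eq (arr f g) (iota 0 m).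
Proof.
move=> injf injg; apply: perm_trans (perm_aw injf); rewrite -flatten_ws -map_W_enum //.
rewrite /arr (map_comp (W f) g); apply/perm_flatten/perm_map/perm_enum_inj/injg.
Qed.

Lemma take_arr f g : injective f -> g ord0 = ord_max -> take L (arr f g) = wf f.
Proof.
move=> injf g0; rewrite /arr enum_ordSl /= g0 W_max //.
by rewrite take_size_cat // size_wf.
Qed.

Lemma enum_ordS : [seq ordS j | j <- enum 'I_n] = rot 1 (enum 'I_n).
Proof.
apply: (inj_map val_inj); rewrite map_rot -map_comp.
have -> : [seq (val \o ordS (n:=n)) i | i <- enum 'I_n] =
   [seq x.+1 %% n | x <- map val (enum 'I_n)] by rewrite -map_comp.
rewrite val_enum_ord; apply: (@eq_from_nth _ 0); first by rewrite size_map size_rot.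
move=> i; rewrite size_map size_iota => ilt.
rewrite (nth_map 0) ?size_iota // nth_iota // add0n.
rewrite [iota 0 n]/= rot1_cons nth_rcons size_iota.
case: ltngtP => [ik|//|->]; last by rewrite modnn.
  by rewrite nth_iota // modn_small.
by move: ilt; rewrite ltnS leqNgt => /negP.
Qed.

Definition sh g : {ffun 'I_n -> 'I_n} := [ffun j => g (ordS j)].

Lemma arr_sh f g : injective f -> g ord0 != ord_max -> arr f (sh g) = rot 1 (arr f g).
Proof.
move=> injf g0; rewrite /arr.
have -> : [seq W f (sh g j) | j <- enum 'I_n] = [seq W f (g j) | j <- rot 1 (enum 'I_n)].
  by rewrite -enum_ordS -[in RHS]map_comp; apply: eq_map => j /=; rewrite ffunE.
rewrite map_rot enum_ordSl /= rot1_cons flatten_rcons W_lt //.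
by rewrite rot1_cons cats1.
Qed.

End Comb.
Local Open Scope ring_scope.


Section Conc.
Variable F : fieldType.
Local Notation FA := (FA F).
Variables (k m : nat).
Hypothesis Hkm : (k < m)%N.
Local Notation L := (m - k)%N.
Local Notation n := k.+1.
Implicit Types (f : {ffun 'I_L -> 'I_m}) (g : {ffun 'I_n -> 'I_n}).

Definition ys f (j : 'I_n) : FA := << FMonom (W f j) >>.
Definition Sf f : FA := \sum_(g : {ffun 'I_n -> 'I_n} | injectiveb g) \prod_j ys f (g j).

Lemma prod_fm (I : Type) (r : seq I) (u : I -> seq nat) :
  \prod_(j <- r) (<< FMonom (u j) >> : FA) = << FMonom (flatten (map u r)) >>.
Proof.
elim: r => [|a r IH]; first by rewrite big_nil /= -fm1 fmK.
rewrite big_cons IH /= malgM_def fgmulUU mulr1; congr << _ >>.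
by apply/eqP; rewrite fmP fmM.
Qed.

Lemma prod_ys f g : \prod_j ys f (g j) = << FMonom (arr f g) >>.
Proof. by rewrite /ys [index_enum _]unlock -enumT prod_fm. Qed.

Definition Y f (t : seq nat) : F := \sum_(g : {ffun 'I_n -> 'I_n} | injectiveb g) ((arr f g == t)%:R : F).
Definition Zp f (p : 'I_n) (t : seq nat) : F :=
  \sum_(g : {ffun 'I_n -> 'I_n} | injectiveb g && (g p == ord_max)) ((arr f g == t)%:R : F).

Lemma coeff_Sf f t : (Sf f : {malg F[{fmonom nat}]})@_(FMonom t) = Y f t.
Proof.
rewrite /Sf raddf_sum; apply: eq_bigr => g _.
rewrite prod_ys.
by have := @mcoeffU1 {fmonom nat} F (FMonom (arr f g)) (FMonom t); rewrite fmP => <-.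
Qed.

Lemma Y_Zp f t : Y f t = \sum_(p : 'I_n) Zp f p t.
Proof.
rewrite /Zp (exchange_big_dep (fun g : {ffun 'I_n -> 'I_n} => injectiveb g)) /=;
  last by move=> p g _ /andP [].
rewrite /Y; apply: eq_bigr => g ig; have injg := injectiveP _ ig.
rewrite (bigD1 (invF injg ord_max)) /=; last by rewrite ig f_invF eqxx.
rewrite big1 ?addr0 // => p /andP [/andP [_ /eqP gp] np].
by case/eqP: np; rewrite -gp invF_f.
Qed.


Lemma sh_inj : injective (@sh k).
Proof.
move=> g1 g2 E; apply/ffunP => j; rewrite -(ord_predK j).
by have := congr1 (fun h : {ffun 'I_n -> 'I_n} => h (ord_pred j)) E; rewrite !ffunE.
Qed.

Lemma injb_sh g : injectiveb (sh g) = injectiveb g.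
Proof.
apply/injectiveP/injectiveP => H x y.
  move=> E; apply: (can_inj (@ord_predK n)); apply: H; rewrite !ffunE.
  by rewrite !ord_predK.
by rewrite !ffunE => /H; apply: (can_inj (@ordSK n)).
Qed.

Lemma Zp_shift f p t : injective f -> (p.+1 < n)%N ->
  Zp f (inord p) (rot 1 t) = Zp f (inord p.+1) t.
Proof.
move=> injf hp; rewrite /Zp (reindex_inj sh_inj) /=.
have eS : ordS (inord p : 'I_n) = inord p.+1.
  by apply: val_inj; rewrite /= inordK ?modn_small ?inordK // ltnW.
apply: eq_big => [g|g /andP [ig /eqP gp]]; first by rewrite injb_sh ffunE eS.
rewrite ffunE eS in gp; rewrite injb_sh in ig.
rewrite arr_sh // ?(inj_eq rot_inj) //.
apply/negP => /eqP g0; have injg := injectiveP _ ig.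
have : (inord p.+1 : 'I_n) = ord0 by apply: injg; rewrite gp g0.
by move/(congr1 val); rewrite /= inordK.
Qed.

Lemma Zp_iter f p t : injective f -> (p < n)%N ->
  Zp f (inord p) t = Zp f ord0 (iter p (rot 1) t).
Proof.
move=> injf; elim: p t => [|p IH] t hp.
  by congr Zp; apply: val_inj; rewrite /= inordK.
by rewrite -Zp_shift // IH ?iterSr // ltnW.
Qed.

Lemma Y_rot f t : injective f ->
  Y f t = \sum_(p < n) Zp f ord0 (iter p (rot 1) t).
Proof.
move=> injf; rewrite Y_Zp; apply: eq_bigr => p _.
by rewrite -Zp_iter // inord_val.
Qed.

End Conc.


Section Conc2.
Variable F : fieldType.
Local Notation FA := (FA F).
Variables (k m : nat).
Hypothesis Hkm : (k < m)%N.
Local Notation L := (m - k)%N.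
Local Notation n := k.+1.
Implicit Types (f : {ffun 'I_L -> 'I_m}) (g : {ffun 'I_n -> 'I_n}).

Lemma ys_nonunital f i : injective f -> nonunital (ys F f i).
Proof.
move=> injf; apply/nonunitalE.
have := @mcoeffU1 {fmonom nat} F (FMonom (W f i)) 1%M.
rewrite /ys => ->; rewrite fmP fm1 /=.
by have := W_neq0 Hkm i injf; case: eqP.
Qed.

Lemma Sf_T f : injective f -> Tideal (xvar F 1 ^+ n) (Sf F f).
Proof.
move=> injf I [Inu I0 Ilin Imul] Tinv Ix.
rewrite /Sf -(polar (ys F f)); apply: big_rec => // phi0 x _ Ixx.
set z := \sum_i (if phi0 i then ys F f i else 0).
have nz : nonunital z.
  apply/nonunitalE; rewrite raddf_sum big1 // => i _.
  case: (phi0 i); last by rewrite raddf0.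
  by have /nonunitalE := ys_nonunital i injf.
have Iz : I (z ^+ n).
  by rewrite -(phi_x z) -phiX; apply: Tinv => //; exact: phi_endo.
exact: (Ilin _ _ _ Iz Ixx).
Qed.

Lemma Sf_V f : injective f -> Vm m (Sf F f).
Proof.
move=> injf w; rewrite -mcoeff_neq0 -[w]fmK coeff_Sf /Y.
apply: contraNT => np; rewrite big1 // => g ig.
case: eqP => // E; case/negP: np; rewrite -E /=.
exact/perm_arr/injectiveP.
Qed.

End Conc2.

Section Rot.
Variable F : fieldType.

Lemma period (T : Type) (r : T -> T) (P : pred T) (X : T -> F) a b :
  (forall t, P t -> P (r t)) -> (0 < b)%N -> coprime a b ->
  (forall t, P t -> X (iter a r t) = X t) -> (forall t, P t -> iter b r t = t) ->
  forall t, P t -> X (r t) = X t.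
Proof.
move=> Pr b0 cab Xa Ib.
have iterP j t : P t -> P (iter j r t) by elim: j => //= j IH /IH /Pr.
have Xja j t : P t -> X (iter (j * a) r t) = X t.
  elim: j => [//|j IH] Pt; rewrite mulSn iterD Xa ?IH //; exact: iterP.
have Ijb j t : P t -> iter (j * b) r t = t.
  elim: j => [//|j IH] Pt; rewrite mulSn iterD IH //; exact: Ib.
move=> t Pt; have [c _] := Bezoutl a b0.
rewrite gcdnC (eqP cab) => /dvdnP [d Ed].
rewrite -(Xja c (r t)) ?Pr // -iterSr -add1n Ed; congr X; exact: Ijb.
Qed.

Lemma iter_rot (t : seq nat) j : (j <= size t)%N -> iter j (rot 1) t = rot j t.
Proof.
elim: j => [|j IH] hj; first by rewrite rot0.
rewrite iterS IH; last exact: ltnW.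
by rewrite (@rotS _ j).
Qed.

Lemma rot_arg (n m : nat) (X : seq nat -> F) (P : pred (seq nat)) :
  [pchar F] =i pred0 -> (0 < n)%N -> (0 < m)%N -> coprime n m ->
  (forall t, P t -> P (rot 1 t)) -> (forall t, P t -> size t = m) ->
  (forall t, P t -> \sum_(p < n) X (iter p (rot 1) t) = 0) ->
  forall t, P t -> X t = 0.
Proof.
move=> ch0 n0 m0 cnm Pr Ps S0.
have iterP j t : P t -> P (iter j (rot 1) t) by elim: j => //= j IH /IH /Pr.
have Xn t : P t -> X (iter n (rot 1) t) = X t.
  move=> Pt; have E2 := S0 _ (Pr _ Pt); have E1 := S0 _ Pt.
  case: n n0 {cnm S0} E1 E2 => // n' _.
  rewrite big_ord_recl big_ord_recr /=.
  set A := \sum_(i < n') _; set B := \sum_(i < n') _.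
  have AB : A = B by apply: eq_bigr => i _; rewrite add0n -iterS iterSr.
  rewrite AB => /eqP; rewrite addr_eq0 => /eqP -> /eqP; rewrite addrC addr_eq0 => /eqP <-.
  by rewrite -iterS iterSr.
have Xr := @period _ (rot 1) P X n m Pr m0 cnm Xn.
have Xm t : P t -> iter m (rot 1) t = t.
  by move=> Pt; rewrite iter_rot -(Ps _ Pt) ?rot_size.
move=> t Pt; have Xi j : X (iter j (rot 1) t) = X t.
  by elim: j => // j IH; rewrite iterS Xr ?iterP.
have := S0 _ Pt; under eq_bigr do rewrite Xi.
rewrite sumr_const card_ord -mulr_natl => /eqP; rewrite mulf_eq0.
by move/pcharf0P: ch0 => ->; rewrite (negbTE (lt0n_neq0 n0)) => /eqP.
Qed.
End Rot.

Section VS.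
Variable F : fieldType.
Variable vT : vectType F.

Lemma span_P (P : vT -> Prop) (s : seq vT) : P 0 ->
  (forall c u v, P u -> P v -> P (c *: u + v)) ->
  (forall x, x \in s -> P x) -> forall v, v \in <<s>>%VS -> P v.
Proof.
move=> P0 Plin Ps v; rewrite -[s]/(tval (in_tuple s)) => /coord_span ->.
apply: big_rec => // i x _ Px; apply: Plin => //; apply: Ps.
by apply: mem_nth; exact: ltn_ord.
Qed.

Lemma exists_vspace (P : vT -> Prop) : P 0 ->
  (forall c u v, P u -> P v -> P (c *: u + v)) ->
  exists U : {vspace vT}, forall v, v \in U <-> P v.
Proof.
move=> P0 Plin.
suff H : forall d (s : seq vT), (forall x, x \in s -> P x) ->
    (\dim (fullv : {vspace vT}) - \dim <<s>> <= d)%N ->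
    exists U : {vspace vT}, forall v, v \in U <-> P v.
  by apply: (H _ [::]) => //.
elim=> [|d IH] s Ps hd.
all: case: (classic (exists v, P v /\ v \notin <<s>>%VS)) => [[v [Pv nv]]|nex];
  last by exists <<s>>%VS => v; split; [exact: span_P|
     move=> Pv; apply/negPn/negP => nv; apply: nex; exists v].
all: have lt : (\dim <<s>> < \dim <<v :: s>>)%N.
all: try (have sub : (<<s>> <= <<v :: s>>)%VS by apply: sub_span => x xs; rewrite inE xs orbT).
all: try (rewrite ltn_neqAle dimvS // andbT (dimv_leqif_sup sub).2;
  apply/negP => /subvP /(_ v (memv_span (mem_head _ _))); exact/negP).
all: have le := dimvS (subvf <<v :: s>>).
  by move: hd; rewrite leqn0 subn_eq0 => hd; have := leq_trans lt (leq_trans le hd); rewrite ltnn.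
apply: (IH (v :: s)); first by move=> x; rewrite inE => /orP [/eqP ->|/Ps].
lia.
Qed.
End VS.


Section Fin.
Variable F : fieldType.
Local Notation FA := (FA F).

Lemma wf_inj k m (f1 f2 : {ffun 'I_(m - k) -> 'I_m}) : wf f1 = wf f2 -> f1 = f2.
Proof.
move=> E; apply/ffunP => x; apply: val_inj.
have := congr1 (fun s => nth 0%N s x) E.
by rewrite /wf !(nth_map x) -?enumT ?nth_ord_enum ?size_enum_ord.
Qed.

Lemma seq_ord m (t : seq nat) : all (fun x => x < m)%N t ->
  exists s : seq 'I_m, map val s = t.
Proof.
elim: t => [|x t IH] /=; first by exists [::].
case/andP => xm /IH [s Es]; exists (Ordinal xm :: s); by rewrite /= Es.
Qed.

Lemma coordV_lin m (c : F) (p q : FA) :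
  coordV m (c *: p + q) = c *: coordV m p + coordV m q.
Proof. by apply/rowP => i; rewrite !mxE mcoeffD mcoeffZ. Qed.

Lemma coordV_entry m (p : FA) (tt : m.-tuple 'I_m) :
  coordV m p 0 (enum_rank tt) = (p : {malg F[{fmonom nat}]})@_(FMonom (map val tt)).
Proof. by rewrite mxE enum_rankK. Qed.


Lemma free_Sf k m (ch0 : [pchar F] =i pred0) (Hkm : (k < m)%N) (cop : coprime k.+1 m) :
  free [seq coordV m (Sf F f) | f <- enum [set f : {ffun 'I_(m - k) -> 'I_m} | injectiveb f]].
Proof.
set E := enum _.
have m0 : (0 < m)%N by apply: leq_ltn_trans Hkm.
pose f0 : {ffun 'I_(m - k) -> 'I_m} := [ffun _ => Ordinal m0].
set s := map _ E.
have szs : size s = size E by rewrite size_map.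
have injE i : (i < size E)%N -> injective (nth f0 E i).
  move=> iE; have := mem_nth f0 iE; rewrite mem_enum inE; exact/injectiveP.
rewrite -[s]/(tval (in_tuple s)); apply/freeP => c Hc i0.
have sE (i : 'I_(size s)) : (in_tuple s)`_i = coordV m (Sf F (nth f0 E i)).
  by rewrite /= (nth_map f0) // -szs.
pose Pt (t : seq nat) := (size t == m) && all (fun x => x < m)%N t.
have HY t : Pt t -> \sum_(i < size s) c i * Y F (nth f0 E i) t = 0.
  case/andP => /eqP st /seq_ord [u Eu].
  have su : size u == m by apply/eqP; rewrite -[RHS]st -Eu size_map.
  pose tt : m.-tuple 'I_m := Tuple su.
  have := congr1 (fun v : 'rV[F]_#|{: m.-tuple 'I_m}| => v 0 (enum_rank tt)) Hc.
  rewrite summxE mxE => H; rewrite -[X in _ = X]H; apply: eq_bigr => i _.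
  by rewrite mxE sE coordV_entry /= Eu coeff_Sf.
pose X t := \sum_(i < size s) c i * Zp F (nth f0 E i) ord0 t.
have X0 : forall t, Pt t -> X t = 0.
  apply: (rot_arg (n := k.+1) (m := m)) => //.
  - move=> t /andP [/eqP st al]; have pr : perm_eq (rot 1 t) t by rewrite (perm_rot 1 t).
    by rewrite /Pt size_rot st eqxx (perm_all _ pr).
  - by move=> t /andP [/eqP].
  move=> t Pt_t; rewrite -[Z in _ = Z](HY t Pt_t) /X /= exchange_big /=; apply: eq_bigr => i _.
  rewrite (Y_rot _ Hkm) -?mulr_sumr //; apply: injE; rewrite -szs; exact: ltn_ord.
have ii0 : (i0 < size E)%N by rewrite -szs.
pose g0 : {ffun 'I_k.+1 -> 'I_k.+1} := [ffun j => tperm ord0 ord_max j].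
have injg0 : injective g0 by move=> x y; rewrite !ffunE; exact: perm_inj.
have g00 : g0 ord0 = ord_max by rewrite ffunE tpermL.
set t0 := arr (nth f0 E i0) g0.
have Pt0 : Pt t0.
  have pe := perm_arr Hkm (injE _ ii0) injg0.
  rewrite /Pt (perm_size pe) size_iota eqxx (perm_all _ pe) /=.
  by apply/allP => x; rewrite mem_iota.
have := X0 _ Pt0; rewrite /X (bigD1 i0) //= big1 ?addr0.
  move/eqP; rewrite mulf_eq0 => /orP [/eqP //|].
  rewrite /Zp -natr_sum (bigD1 g0) /=; last by rewrite g00 eqxx andbT; apply/injectiveP.
  by move/pcharf0P: ch0 => ->; rewrite eqxx.
move=> i ni; rewrite /Zp big1 ?mulr0 // => g /andP [/injectiveP injg /eqP g0'].
case: eqP => // Ea; exfalso.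
have iE : (i < size E)%N by rewrite -szs.
have w1 := take_arr Hkm (injE _ iE) g0'.
rewrite Ea /t0 (take_arr Hkm (injE _ ii0) g00) in w1.
have /eqP := wf_inj w1; rewrite nth_uniq ?enum_uniq // => /eqP ei.
by case/eqP: ni; apply: val_inj.
Qed.
End Fin.

Lemma main_aux (F : fieldType) (charF0 : [pchar F]%R =i pred0)
  (n m : nat) (n_gt0 : (0 < n)%N) (n_le_m : (n <= m)%N) (cop : coprime n m) :
  @dim_ge F m (@Wnm F n m) (m`! %/ n.-1`!).
Proof.
case: n n_gt0 n_le_m cop => // k _ Hkm cop /=.
pose P (v : 'rV[F]_#|{: m.-tuple 'I_m}|) := exists p, Wnm k.+1 m p /\ coordV m p = v.
have P0 : P 0.
  exists 0; split; last by apply/rowP => i; rewrite !mxE raddf0.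
  split; first by move=> w; rewrite -mcoeff_neq0 raddf0 eqxx.
  by move=> I [_ I0 _ _] _ _.
have Plin : forall c u v, P u -> P v -> P (c *: u + v).
  move=> c u v [p [[Vp Tp] <-]] [q [[Vq Tq] <-]]; exists (c *: p + q).
  split; last exact: coordV_lin.
  split.
    move=> w; rewrite -mcoeff_neq0 raddfD /= => nz.
    case: (boolP (w \in msupp p)) => [/Vp //|np]; apply: Vq.
    rewrite -mcoeff_neq0; move: nz.
    by rewrite (_ : (c *: p : {malg F[{fmonom nat}]})@_w = 0) ?add0r // mcoeffZ (mcoeff_outdom np) mulr0.
  move=> I HI Ti Ix; have [_ _ Ilin _] := HI.
  exact: Ilin (Tp I HI Ti Ix) (Tq I HI Ti Ix).
have [U HU] := exists_vspace P0 Plin.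
exists U; split => //.
set E := enum [set f : {ffun 'I_(m - k) -> 'I_m} | injectiveb f].
have fs := @free_Sf F k m charF0 Hkm cop.
have sU : (<<[seq coordV m (Sf F f) | f <- E]>> <= U)%VS.
  apply/span_subvP => x /mapP [f fE ->]; apply/HU; exists (Sf F f); split => //.
  have injf : injective f by move: fE; rewrite mem_enum inE => /injectiveP.
  by split; [apply: Sf_V | apply: Sf_T].
have := dimvS sU; rewrite (eqP fs) size_map -cardE card_inj_ffuns !card_ord.
by rewrite ffact_factd ?leq_subr // subKn // ltnW.
Qed.

Local Close Scope ring_scope.

Theorem proposition5p5 (F : fieldType) (charF0 : [pchar F]%R =i pred0)
  (n m : nat) (n_gt0 : (0 < n)%N) (n_le_m : (n <= m)%N) (cop : coprime n m) :
  @dim_ge F m (@Wnm F n m) (m`! %/ n.-1`!).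
Proof. exact: main_aux. Qed.
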